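(* There is a vector $\Delta\in\mathbb R^d$ such that $$w-w^\star=H(\phi-\phi^\star)+\nabla g(\phi^\star)^\top(\lambda-\lambda^\star)+\Delta,$$ with $\|\Delta\|_{H^{-1}}\le\frac14\|\phi-\phi^\star\|_H+L\,\|\phi-\phi^\star\|_H\,\|\lambda-\lambda^\star\|_W$, and moreover $$\|P_GH^{1/2}(\phi-\phi^\star)\|_2\le\frac L2\|\phi-\phi^\star\|_H^2.$$
   Context: Let $m\le d$ and $g=(g_1,\dots,g_m):\mathbb R^d\to\mathbb R^m$, each $g_i$ strongly convex and twice differentiable; $\Phi=\{x:g(x)\le0\}$; $\nabla g(x)\in\mathbb R^{m\times d}$ is the Jacobian. For $w^\star,w\in\mathbb R^d$ let $\phi^\star=\arg\max_{x\in\Phi}x^\top w^\star$, $\phi=\arg\max_{x\in\Phi}x^\top w$, with $g(\phi^\star)=g(\phi)=0$. $\lambda^\star,\lambda\in\mathbb R^m_{\ge0}$ are KKT multipliers: $w^\star=\nabla g(\phi^\star)^\top\lambda^\star$, $w=\nabla g(\phi)^\top\lambda$. $H=\sum_i\lambda^\star_i\nabla^2g_i(\phi^\star)$, positive definite; $\|x\|_M=\sqrt{x^\top Mx}$. $W=\nabla g(\phi^\star)H^{-1}\nabla g(\phi^\star)^\top$, invertible. $P_G=H^{-1/2}\nabla g(\phi^\star)^\top W^{-1}\nabla g(\phi^\star)H^{-1/2}$. Smoothness: (S1) $\|\{\nabla g(\phi)-\nabla g(\phi^\star)\}^\top\lambda^\star-H(\phi-\phi^\star)\|_{H^{-1}}\le\frac14\|\phi-\phi^\star\|_H$;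 (S2) there is $L>0$ with $\|W^{-1/2}\{\nabla g(x)-\nabla g(\phi^\star)\}H^{-1/2}\|_2\le L\|x-\phi^\star\|_H$ for all $x\in\mathbb R^d$. *)

(* Defs.v *)
From HB Require Import structures.
From mathcomp Require Import all_boot all_order all_algebra.
From mathcomp Require Import all_classical all_reals all_analysis.
Set Implicit Arguments. Unset Strict Implicit. Unset Printing Implicit Defensive.
Import Order.TTheory GRing.Theory Num.Theory.
Import numFieldNormedType.Exports.
Local Open Scope ring_scope.
Local Open Scope classical_set_scope.

Section Defs.
Variable R : realType.

(* The library's [jacobian] works on row vectors and is the
   d x m transpose; we transport along transposition. *)
Definition Jac (d m : nat) (g : 'cV[R]_d -> 'cV[R]_m) (x : 'cV[R]_d) : 'M[R]_(m, d) :=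
  (jacobian (fun r : 'rV[R]_d => (g r^T)^T) x^T)^T.

Definition grad (d : nat) (f : 'cV[R]_d -> R) (x : 'cV[R]_d) : 'cV[R]_d :=
  (Jac (fun y => (const_mx (f y) : 'cV[R]_1)) x)^T.

(* Hessian matrix: entry (j,k) = d/dx_k d/dx_j f *)
Definition hess (d : nat) (f : 'cV[R]_d -> R) (x : 'cV[R]_d) : 'M[R]_d :=
  Jac (grad f) x.

Definition gcomp (d m : nat) (g : 'cV[R]_d -> 'cV[R]_m) (i : 'I_m) : 'cV[R]_d -> R :=
  fun x => g x i 0.

Definition enorm (n : nat) (v : 'cV[R]_n) : R := Num.sqrt (\sum_i v i 0 ^+ 2).

Definition mnorm (n : nat) (M : 'M[R]_n) (v : 'cV[R]_n) : R :=
  Num.sqrt ((v^T *m M *m v) 0 0).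

Definition opnorm2 (p q : nat) (A : 'M[R]_(p, q)) : R :=
  sup [set enorm (A *m v) | v in [set v : 'cV[R]_q | enorm v <= 1]].

Definition symmx (n : nat) (A : 'M[R]_n) : Prop := A^T = A.

Definition posdef (n : nat) (A : 'M[R]_n) : Prop :=
  forall v : 'cV[R]_n, v != 0 -> 0 < (v^T *m A *m v) 0 0.

Definition strongly_convex (d : nat) (f : 'cV[R]_d -> R) : Prop :=
  exists2 mu : R, 0 < mu &
    forall (x y : 'cV[R]_d) (t : R), 0 <= t <= 1 ->
      f (t *: x + (1 - t) *: y) <=
        t * f x + (1 - t) * f y - mu / 2 * t * (1 - t) * enorm (x - y) ^+ 2.

Definition twice_differentiable (d : nat) (f : 'cV[R]_d -> R) : Prop :=
  (forall x, differentiable f x) /\ (forall x, differentiable (grad f) x).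

Definition is_argmax (d : nat) (Phi : set 'cV[R]_d) (w x : 'cV[R]_d) : Prop :=
  Phi x /\ forall y, Phi y -> (y^T *m w) 0 0 <= (x^T *m w) 0 0.

End Defs.

(* Main.v *)
Require Import Defs.
From HB Require Import structures.
From mathcomp Require Import all_boot all_order all_algebra.
From mathcomp Require Import all_classical all_reals all_analysis.
From mathcomp Require Import ring lra.
Import Order.TTheory GRing.Theory Num.Theory.
Import numFieldNormedType.Exports.
Local Open Scope ring_scope.
Local Open Scope classical_set_scope.
Section LA.
Set Implicit Arguments. Unset Strict Implicit.
Variable R : realType.
Implicit Types (n : nat).

Definition dot n (u v : 'cV[R]_n) : R := (u^T *m v) 0 0.
Arguments dot {n} u v.
Lemma mul_self_ge0 (x : R) : 0 <= x * x.
Proof. by rewrite -expr2 sqr_ge0. Qed.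

Lemma dotE n (u v : 'cV[R]_n) : dot u v = \sum_i u i 0 * v i 0.
Proof. by rewrite /dot mxE; apply: eq_bigr => i _; rewrite mxE. Qed.

Lemma dotC n (u v : 'cV[R]_n) : dot u v = dot v u.
Proof. by rewrite !dotE; apply: eq_bigr => i _; rewrite mulrC. Qed.

Lemma dot_ge0 n (u : 'cV[R]_n) : 0 <= dot u u.
Proof. by rewrite dotE; apply: sumr_ge0 => i _; apply: mul_self_ge0. Qed.

Lemma enorm_sqr n (v : 'cV[R]_n) : enorm v ^+ 2 = dot v v.
Proof.
rewrite /enorm sqr_sqrtr ?dotE; last by apply: sumr_ge0 => i _; apply: sqr_ge0.
by apply: eq_bigr => i _; rewrite expr2.
Qed.

Lemma enormE n (v : 'cV[R]_n) : enorm v = Num.sqrt (dot v v).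
Proof. by rewrite /enorm dotE; congr Num.sqrt; apply: eq_bigr => i _; rewrite expr2. Qed.

Lemma enorm_ge0 n (v : 'cV[R]_n) : 0 <= enorm v.
Proof. exact: sqrtr_ge0. Qed.

Lemma dot_eq0 n (v : 'cV[R]_n) : dot v v = 0 -> v = 0.
Proof.
rewrite dotE => h; apply/matrixP => i j; rewrite (ord1 j) mxE.
have := psumr_eq0P (fun i _ => mul_self_ge0 (v i 0)) h (i:=i) isT.
by move/eqP; rewrite mulf_eq0 orbb => /eqP.
Qed.

Lemma enorm_eq0 n (v : 'cV[R]_n) : enorm v = 0 -> v = 0.
Proof.
move=> h; apply: dot_eq0; rewrite -enorm_sqr h; by rewrite expr0n.
Qed.

Lemma enorm0 n : enorm (0 : 'cV[R]_n) = 0.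
Proof. by rewrite /enorm big1 ?sqrtr0 // => i _; rewrite mxE expr0n. Qed.

Lemma dotZl n a (u v : 'cV[R]_n) : dot (a *: u) v = a * dot u v.
Proof. by rewrite !dotE mulr_sumr; apply: eq_bigr => i _; rewrite mxE mulrA. Qed.

Lemma dotDl n (u u' v : 'cV[R]_n) : dot (u + u') v = dot u v + dot u' v.
Proof. by rewrite !dotE -big_split; apply: eq_bigr => i _; rewrite mxE mulrDl. Qed.

Lemma dotNl n (u v : 'cV[R]_n) : dot (- u) v = - dot u v.
Proof. by rewrite !dotE -sumrN; apply: eq_bigr => i _; rewrite mxE mulNr. Qed.

Lemma dotZr n a (u v : 'cV[R]_n) : dot u (a *: v) = a * dot u v.
Proof. by rewrite dotC dotZl dotC. Qed.
Lemma dotDr n (u v v' : 'cV[R]_n) : dot u (v + v') = dot u v + dot u v'.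
Proof. by rewrite dotC dotDl !(dotC u). Qed.
Lemma dotNr n (u v : 'cV[R]_n) : dot u (- v) = - dot u v.
Proof. by rewrite dotC dotNl dotC. Qed.

Lemma CS n (u v : 'cV[R]_n) : dot u v <= enorm u * enorm v.
Proof.
set a := enorm u; set b := enorm v.
have a0 : 0 <= a by apply: enorm_ge0.
have b0 : 0 <= b by apply: enorm_ge0.
have [a00|apos] := eqVneq a 0.
  by rewrite (enorm_eq0 a00) dotC dotE big1 ?a00 ?mul0r // => i _; rewrite mxE mulr0.
have [b00|bpos] := eqVneq b 0.
  by rewrite (enorm_eq0 b00) dotE big1 ?b00 ?mulr0 // => i _; rewrite mxE mulr0.
have h := dot_ge0 (b *: u - a *: v).
rewrite !(dotDl, dotDr, dotNl, dotNr, dotZl, dotZr) in h.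
rewrite -!enorm_sqr -/a -/b (dotC v u) in h.
have abp : 0 < a * b by rewrite mulr_gt0 // lt0r ?apos ?bpos.
have : 0 <= (a * b) * (2 * (a * b - dot u v)).
  move: h; set c := dot u v => h.
  have -> : a * b * (2 * (a * b - c)) = b * (b * a ^+ 2 - a * c) + (b * - (a * c) - a * - (a * b ^+ 2)) by ring.
  exact: h.
rewrite pmulr_rge0 // pmulr_rge0 // subr_ge0 //.
Qed.

Lemma CSabs n (u v : 'cV[R]_n) : `|dot u v| <= enorm u * enorm v.
Proof.
rewrite ler_norml CS andbT lerNl -dotNl.
have -> : enorm u = enorm (- u).
  by rewrite !enormE dotNl dotNr opprK.
exact: CS.
Qed.

Lemma enormN n (u : 'cV[R]_n) : enorm (- u) = enorm u.
Proof. by rewrite !enormE dotNl dotNr opprK. Qed.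

Lemma enormZ n a (u : 'cV[R]_n) : enorm (a *: u) = `|a| * enorm u.
Proof.
by rewrite !enormE dotZl dotZr mulrA sqrtrM ?mul_self_ge0 // -expr2 sqrtr_sqr.
Qed.

Lemma enorm_triangle n (u v : 'cV[R]_n) : enorm (u + v) <= enorm u + enorm v.
Proof.
rewrite -(ler_pXn2r (n:=2)) ?nnegrE ?addr_ge0 ?enorm_ge0 //.
rewrite enorm_sqr dotDl !dotDr -!enorm_sqr (dotC v u).
have := CS u v; set c := dot u v => h.
rewrite sqrrD; lra.
Qed.


Lemma mulmx_col_dot p q (A : 'M[R]_(p, q)) (v : 'cV[R]_q) i :
  (A *m v) i 0 = dot (row i A)^T v.
Proof. by rewrite dotE mxE; apply: eq_bigr => j _; rewrite !mxE. Qed.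

Lemma dot_tr p q (A : 'M[R]_(p, q)) (u : 'cV[R]_p) (y : 'cV[R]_q) :
  dot y (A^T *m u) = dot (A *m y) u.
Proof. by rewrite /dot mulmxA trmx_mul. Qed.

Lemma opnorm_set_ub p q (A : 'M[R]_(p, q)) :
  has_ubound [set enorm (A *m v) | v in [set v : 'cV[R]_q | enorm v <= 1]].
Proof.
exists (Num.sqrt (\sum_i enorm (row i A)^T ^+ 2)) => _ [v /= hv <-].
rewrite /enorm; apply: ler_wsqrtr; apply: ler_sum => i _.
rewrite mulmx_col_dot -/(enorm _).
have h1 := CSabs (row i A)^T v.
rewrite -real_normK ?num_real //.
apply: le_trans (_ : (enorm (row i A)^T * enorm v) ^+ 2 <= _).
  by rewrite lerXn2r ?nnegrE ?normr_ge0 ?mulr_ge0 ?enorm_ge0.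
rewrite exprMn ler_piMr ?sqr_ge0 //.
by rewrite expr_le1 ?enorm_ge0.
Qed.

Lemma opnorm_ge0 p q (A : 'M[R]_(p, q)) : 0 <= opnorm2 A.
Proof.
apply: le_trans (ub_le_sup (opnorm_set_ub A) _).
  exact: enorm_ge0 (A *m 0).
by exists 0 => //=; rewrite enorm0.
Qed.

Lemma opnorm_bound p q (A : 'M[R]_(p, q)) (v : 'cV[R]_q) :
  enorm (A *m v) <= opnorm2 A * enorm v.
Proof.
have [v0|vn0] := eqVneq (enorm v) 0.
  by rewrite (enorm_eq0 v0) mulmx0 enorm0 enorm0 mulr0.
have vp : 0 < enorm v by rewrite lt0r vn0 enorm_ge0.
set w := (enorm v)^-1 *: v.
have H1 : enorm (A *m w) <= opnorm2 A.
  apply: (ub_le_sup (opnorm_set_ub A)); exists w => //=.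
  by rewrite /w enormZ ger0_norm ?invr_ge0 ?enorm_ge0 // mulVf.
move: H1; rewrite /w -scalemxAr enormZ ger0_norm ?invr_ge0 ?enorm_ge0 //.
by rewrite ler_pdivrMl // mulrC.
Qed.

Lemma opnorm_tr_bound p q (A : 'M[R]_(p, q)) (u : 'cV[R]_p) :
  enorm (A^T *m u) <= opnorm2 A * enorm u.
Proof.
set y := A^T *m u.
have [y0|yn0] := eqVneq (enorm y) 0.
  by rewrite y0 mulr_ge0 ?opnorm_ge0 ?enorm_ge0.
have yp : 0 < enorm y by rewrite lt0r yn0 enorm_ge0.
have h : enorm y ^+ 2 <= enorm y * (opnorm2 A * enorm u).
  rewrite enorm_sqr {2}/y dot_tr.
  apply: le_trans (CS _ _) _.
  rewrite mulrCA mulrA ler_wpM2r ?enorm_ge0 //.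
  exact: opnorm_bound.
by rewrite expr2 ler_pM2l in h.
Qed.

Lemma enorm_isometry p q (B : 'M[R]_(p, q)) (u : 'cV[R]_q) :
  B^T *m B = 1%:M -> enorm (B *m u) = enorm u.
Proof.
move=> hB; rewrite !enormE; congr Num.sqrt.
by rewrite /dot trmx_mul -!mulmxA (mulmxA B^T) hB mul1mx.
Qed.

Lemma invmx_mul n (A B : 'M[R]_n) : A \in unitmx -> B \in unitmx ->
  invmx (A *m B) = invmx B *m invmx A.
Proof.
move=> uA uB.
have uAB : A *m B \in unitmx by rewrite unitmx_mul uA uB.
rewrite -[RHS]mul1mx -(mulVmx uAB) -mulmxA.
rewrite (_ : (A *m B) *m _ = 1%:M) ?mulmx1 //.
by rewrite -mulmxA (mulmxA B) mulmxV // mul1mx mulmxV.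
Qed.

Lemma posdef_unit n (A : 'M[R]_n) : posdef A -> A \in unitmx.
Proof.
move=> hA; apply/negPn/negP => nu.
have : ~~ row_free A^T by rewrite row_free_unit unitmx_tr.
rewrite -kermx_eq0 => /eqP K0.
have [[i hi]|hn] := pselect (exists i, row i (kermx A^T) != 0); last first.
  apply: K0; apply/row_matrixP => i; rewrite row0.
  by apply/eqP; apply/negPn/negP => h; apply: hn; exists i.
set u := row i (kermx A^T).
have hu : u *m A^T = 0 by rewrite /u -row_mul mulmx_ker row0.
have v0 : u^T != 0 by rewrite -[0]trmx0 (inj_eq (@trmx_inj _ _ _)).
have hz : A *m u^T = 0 by rewrite -[A]trmxK -trmx_mul hu trmx0.
have := hA _ v0.
by rewrite -mulmxA hz mulmx0 mxE ltxx.
Qed.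


Lemma mnorm_half n (H Hh : 'M[R]_n) v : Hh^T = Hh -> Hh *m Hh = H ->
  mnorm H v = enorm (Hh *m v).
Proof.
move=> hs hH; rewrite /mnorm enormE /dot trmx_mul hs -hH.
by rewrite !mulmxA.
Qed.

Lemma mnorm_inv_half n (H Hh : 'M[R]_n) v : Hh^T = Hh -> Hh *m Hh = H ->
  Hh \in unitmx -> mnorm (invmx H) v = enorm (invmx Hh *m v).
Proof.
move=> hs hH hu; apply: mnorm_half.
  by rewrite trmx_inv hs.
by rewrite -hH invmx_mul.
Qed.

Lemma mx_differentiable (V : normedModType R) p q (F : V -> 'M[R]_(p, q)) a :
  (forall i j, differentiable (fun x => F x i j) a) -> differentiable F a.
Proof.
move=> hF.
have -> : F = \sum_i \sum_j (fun x => F x i j *: delta_mx i j).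
  apply: funext => x; rewrite {1}(matrix_sum_delta (F x)) fct_sumE.
  by apply: eq_bigr => i _; rewrite fct_sumE.
apply: differentiable_sum => i; apply: differentiable_sum => j.
exact: differentiableZl.
Qed.

Lemma trmx_differentiable p q (a : 'M[R]_(p, q)) :
  differentiable (fun r : 'M[R]_(p, q) => r^T) a.
Proof.
apply: mx_differentiable => i j.
under eq_fun do rewrite mxE.
exact: differentiable_coord.
Qed.

End LA.

Section Jacs.
Set Implicit Arguments. Unset Strict Implicit.
Variables (R : realType) (m d : nat) (g : 'cV[R]_d -> 'cV[R]_m).
Hypothesis hd : forall i x, differentiable (gcomp g i) x.

Let G := fun r : 'rV[R]_d => (g r^T)^T.

Lemma G_diff a : differentiable G a.
Proof.
apply: mx_differentiable => i j.
rewrite /G.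
have -> : (fun x : 'rV[R]_d => (g x^T)^T i j) = gcomp g j \o (fun r => r^T).
  by apply: funext => x /=; rewrite mxE (ord1 i).
apply: differentiable_comp; first exact: trmx_differentiable.
exact: hd.
Qed.

Lemma derive_tr (f : 'cV[R]_d -> R) (x v : 'cV[R]_d) :
  'D_(v^T) (fun r : 'rV[R]_d => f r^T) x^T = 'D_v f x.
Proof.
rewrite /derive; f_equal; f_equal; apply: funext => h /=.
by rewrite (_ : (h *: v^T + x^T)^T = h *: v + x) ?trmxK //; apply/matrixP => i j; rewrite !mxE.
Qed.

Lemma Jac_dir (x v : 'cV[R]_d) i : (Jac g x *m v) i 0 = 'D_v (gcomp g i) x.
Proof.
rewrite /Jac -[v]trmxK -trmx_mul mxE.
rewrite -/G -deriveEjacobian; last exact: G_diff.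
rewrite derive_mx; last by apply: diff_derivable; apply: G_diff.
rewrite mxE trmxK -derive_tr; congr derive.
by apply: funext => r; rewrite /G mxE.
Qed.

End Jacs.

Section Line.
Variables (R : realType) (d : nat).

Lemma line_derive (f : 'cV[R]_d -> R) (p v : 'cV[R]_d) (t : R) :
  (forall x, differentiable f x) ->
  is_derive t 1 (fun s : R => f (s *: v + p)) ('D_v f (t *: v + p)).
Proof.
move=> hf.
have E : (fun h : R => h^-1 *: (((fun s : R => f (s *: v + p)) \o shift t) (h *: 1)
             - f (t *: v + p)))
       = (fun h : R => h^-1 *: ((f \o shift (t *: v + p)) (h *: v) - f (t *: v + p))).
  apply: funext => h /=; congr (_ *: (f _ - _)).
  rewrite /shift /= scalerDl addrA; congr (_ *: _ + _ + _). by rewrite [_%:A]mulr1.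
apply: DeriveDef.
  rewrite /derivable E; exact: diff_derivable.
by rewrite /derive E.
Qed.

End Line.

Section Key.
Variable R : realType.

Lemma key_bound (h dh : R -> R) (a : R) :
  (forall t : R, is_derive t (1 : R) h (dh t)) -> h 0 = 0 -> h 1 = 0 ->
  (forall t, 0 < t < 1 -> - (a * t) <= dh t - dh 0) -> dh 0 <= a / 2.
Proof.
move=> hh h0 h1 hb.
set c := dh 0.
pose k := h - c \*: (@id R) + (a / 2) \*: ((@id R) ^+ 2).
have kd : forall t : R, is_derive t (1:R) k (dh t - c *: 1 + (a / 2) *: ((2%:R * t ^+ 1) *: 1)).
  by move=> t; apply: is_deriveD.
have kc : continuous k.
  move=> x; apply: differentiable_continuous.
  apply/derivable1_diffP; exact: (@ex_derive _ _ _ _ _ _ _ (kd x)).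
have [x hx E] := @MVT R k (fun t => dh t - c *: 1 + (a / 2) *: ((2%:R * t ^+ 1) *: 1)) 0 1 ltr01
  (fun x _ => kd x) (continuous_subspaceT kc).
move: E; rewrite /k /= !fctE /= h0 h1.
have sE : forall u w : R, u *: w = u * w by [].
rewrite !sE !mulr1 !mulr0 expr1n expr0n /= mulr0 expr1 subr0 mulr1 => E.
move: hx; rewrite in_itv /= => /andP [x0 x1].
have := hb x; rewrite x0 x1 => /(_ isT); rewrite -/c => hbx.
nra.
Qed.

End Key.
Lemma t1 (R : realType) (d m : nat) (J1 J : 'M[R]_(m,d)) (H : 'M[R]_d) (lam ls : 'cV[R]_m) (dphi : 'cV[R]_d) :
  J1^T *m lam - J^T *m ls - H *m dphi - J^T *m (lam - ls) =
  ((J1 - J)^T *m ls - H *m dphi) + (J1 - J)^T *m (lam - ls).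
Proof.
rewrite !linearB /= ?mulmxBl ?mulmxBr.
set a := J1^T *m lam; set b := J1^T *m ls; set c := J^T *m lam; set e := J^T *m ls; set h := H *m dphi.
by apply/matrixP => i j; rewrite !mxE; ring.
Qed.
Theorem lemma5 (R : realType) (m d : nat) (hmd : (m <= d)%N)
  (g : 'cV[R]_d -> 'cV[R]_m)
  (hconv : forall i : 'I_m, strongly_convex (gcomp g i))
  (hdiff : forall i : 'I_m, twice_differentiable (gcomp g i))
  (wstar w phistar phi : 'cV[R]_d)
  (hphistar : is_argmax [set x | forall i : 'I_m, g x i 0 <= 0] wstar phistar)
  (hphi : is_argmax [set x | forall i : 'I_m, g x i 0 <= 0] w phi)
  (hgphistar : g phistar = 0) (hgphi : g phi = 0)
  (lamstar lam : 'cV[R]_m)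
  (hlamstar : forall i : 'I_m, 0 <= lamstar i 0)
  (hlam : forall i : 'I_m, 0 <= lam i 0)
  (hKKTstar : wstar = (Jac g phistar)^T *m lamstar)
  (hKKT : w = (Jac g phi)^T *m lam)
  (H : 'M[R]_d)
  (hH : H = \sum_(i < m) lamstar i 0 *: hess (gcomp g i) phistar)
  (hHpd : posdef H)
  (W : 'M[R]_m)
  (hW : W = Jac g phistar *m invmx H *m (Jac g phistar)^T)
  (hWinv : W \in unitmx)
  (Hhalf : 'M[R]_d) (* H^{1/2} *)
  (hHhalf : symmx Hhalf /\ posdef Hhalf /\ Hhalf *m Hhalf = H)
  (Whalf : 'M[R]_m) (* W^{1/2} *)
  (hWhalf : symmx Whalf /\ posdef Whalf /\ Whalf *m Whalf = W)
  (PG : 'M[R]_d)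
  (hPG : PG = invmx Hhalf *m (Jac g phistar)^T *m invmx W *m Jac g phistar
                *m invmx Hhalf)
  (L : R) (hL : 0 < L)
  (S1 : mnorm (invmx H) ((Jac g phi - Jac g phistar)^T *m lamstar
                          - H *m (phi - phistar))
        <= 4^-1 * mnorm H (phi - phistar))
  (S2 : forall x : 'cV[R]_d,
        opnorm2 (invmx Whalf *m (Jac g x - Jac g phistar) *m invmx Hhalf)
        <= L * mnorm H (x - phistar)) :
  exists Delta : 'cV[R]_d,
    w - wstar = H *m (phi - phistar) + (Jac g phistar)^T *m (lam - lamstar) + Delta
    /\ mnorm (invmx H) Delta
       <= 4^-1 * mnorm H (phi - phistar)
          + L * mnorm H (phi - phistar) * mnorm W (lam - lamstar)
    /\ enorm (PG *m Hhalf *m (phi - phistar))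
       <= L / 2 * mnorm H (phi - phistar) ^+ 2.
Proof.
have hd : forall i x, differentiable (gcomp g i) x by move=> i x; exact: (hdiff i).1.
case: hHhalf => hHs [hHpd' hHH].
case: hWhalf => hWs [hWpd' hWW].
have uHh := posdef_unit hHpd'.
have uWh := posdef_unit hWpd'.
set J := Jac g phistar.
set J1 := Jac g phi.
set dphi := phi - phistar.
set dl := lam - lamstar.
set K := mnorm H dphi.
have KE : K = enorm (Hhalf *m dphi) by rewrite /K (mnorm_half _ hHs hHH).
have K0 : 0 <= K by rewrite KE enorm_ge0.
have iWs : (invmx Whalf)^T = invmx Whalf by rewrite trmx_inv hWs.
have iHs : (invmx Hhalf)^T = invmx Hhalf by rewrite trmx_inv hHs.
exists (w - wstar - H *m dphi - J^T *m dl).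
split.
  set A := H *m dphi; set B := J^T *m dl; set C := w - wstar.
  by apply/matrixP => i j; rewrite !mxE; ring.
split.
  have eqD : w - wstar - H *m dphi - J^T *m dl
     = ((J1 - J)^T *m lamstar - H *m dphi) + (J1 - J)^T *m dl.
    by rewrite hKKT hKKTstar; exact: t1.
  rewrite eqD (mnorm_inv_half _ hHs hHH uHh) mulmxDr.
  apply: le_trans (enorm_triangle _ _) _.
  apply: lerD.
    by rewrite -(mnorm_inv_half _ hHs hHH uHh); exact: S1.
  set A := invmx Whalf *m (J1 - J) *m invmx Hhalf.
  have -> : invmx Hhalf *m ((J1 - J)^T *m dl) = A^T *m (Whalf *m dl).
    by rewrite /A !trmx_mul iWs iHs -!mulmxA mulKmx.
  apply: le_trans (opnorm_tr_bound _ _) _.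
  rewrite (mnorm_half _ hWs hWW).
  apply: ler_wpM2r; first exact: enorm_ge0.
  exact: S2.
set Wi := invmx Whalf; set Hi := invmx Hhalf.
set B := Hi *m J^T *m Wi.
set z := Wi *m (J *m dphi).
have ePG : PG *m Hhalf *m dphi = B *m z.
  rewrite hPG -hWW invmx_mul // -/Wi -/Hi !mulmxA mulmxKV //.
have hHi : Hi *m Hi = invmx H by rewrite -hHH invmx_mul.
have hBB : B^T *m B = 1%:M.
  rewrite /B !trmx_mul trmxK iWs iHs -/Wi -/Hi !mulmxA.
  rewrite -(mulmxA (Wi *m J) Hi Hi) hHi.
  rewrite -(mulmxA Wi J (invmx H)) -(mulmxA Wi (J *m invmx H) J^T) -hW -hWW.
  by rewrite mulmxA /Wi (mulVmx uWh) mul1mx mulmxV.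
rewrite ePG (enorm_isometry _ hBB).
set c := Wi *m z.
pose hf := fun t : R => \sum_i c i 0 * g (t *: dphi + phistar) i 0.
pose dhf := fun t : R => dot c (Jac g (t *: dphi + phistar) *m dphi).
have hder : forall t : R, is_derive t (1 : R) hf (dhf t).
  move=> t.
  have -> : hf = \sum_i (fun t => c i 0 * g (t *: dphi + phistar) i 0).
    by apply: funext => s; rewrite fct_sumE.
  rewrite /dhf dotE.
  apply: is_derive_sum => i.
  rewrite Jac_dir //.
  exact: (is_deriveZ (c i 0) (line_derive phistar dphi t (hd i))).
have h0 : hf 0 = 0.
  rewrite /hf scale0r add0r hgphistar big1 // => i _. by rewrite (_ : (0 : 'cV[R]_m) i 0 = 0) ?mulr0 // mxE.
have h1 : hf 1 = 0.
  rewrite /hf scale1r /dphi subrK hgphi big1 // => i _; by rewrite (_ : (0 : 'cV[R]_m) i 0 = 0) ?mulr0 // mxE.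
have e0 : dhf 0 = dot c (J *m dphi) by rewrite /dhf scale0r add0r.
set a := enorm z * L * K ^+ 2.
have hb : forall t, 0 < t < 1 -> - (a * t) <= dhf t - dhf 0.
  move=> t /andP [t0 t1].
  set Jt := Jac g (t *: dphi + phistar).
  set At := Wi *m (Jt - J) *m Hi.
  have -> : dhf t - dhf 0 = dot z (At *m (Hhalf *m dphi)).
    rewrite e0 /dhf -/Jt -dotNr -dotDr -mulmxBl /c -dot_tr iWs.
    by rewrite /At -!mulmxA (mulKmx uHh).
  have hA : opnorm2 At <= L * (t * K).
    have := S2 (t *: dphi + phistar).
    rewrite addrK (mnorm_half _ hHs hHH) -scalemxAr enormZ (ger0_norm (ltW t0)) -KE.
    by move=> h; exact: h.
  have hAn := opnorm_bound At (Hhalf *m dphi); rewrite -KE in hAn.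
  have := CSabs z (At *m (Hhalf *m dphi)).
  rewrite ler_norml => /andP [hl _]; apply: le_trans hl.
  rewrite lerN2.
  have -> : a * t = enorm z * (L * (t * K) * K) by rewrite /a; ring.
  apply: ler_wpM2l; first exact: enorm_ge0.
  apply: le_trans hAn _.
  by rewrite ler_wpM2r.
have := key_bound hder h0 h1 hb.
rewrite e0 /c -dot_tr iWs -/z -enorm_sqr /a.
have [z0|zn0] := eqVneq (enorm z) 0.
  move=> _; rewrite z0; apply: mulr_ge0; last exact: sqr_ge0.
  by apply: divr_ge0; [exact: ltW | ].
have zp : 0 < enorm z by rewrite lt0r zn0 enorm_ge0.
have -> : enorm z * L * K ^+ 2 / 2 = enorm z * (L / 2 * K ^+ 2) by ring.
by rewrite expr2 ler_pM2l.
Qed.
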